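(* Let $\mathcal{A}$ be a unital C$^*$-algebra with center $Z(\mathcal{A})$. (1) If $L$ is a complete transfer action for a C$^*$-dynamical system $(\mathcal{A},\Gamma^+,\alpha)$, then $(\alpha,L)$ is a complete interaction and $L_x(1)\in Z(\mathcal{A})$ for all $x\in\Gamma^+$. (2) Conversely, if $(\mathcal{V},\mathcal{H})$ is a complete interaction such that $\mathcal{H}_x(1)\in Z(\mathcal{A})$ for all $x\in\Gamma^+$, then each $\mathcal{V}_x$ is multiplicative, i.e. $(\mathcal{A},\Gamma^+,\mathcal{V})$ is a C$^*$-dynamical system, and $\mathcal{H}$ is a complete transfer action for it.
   Context: $\Gamma$ is a totally ordered abelian group with identity $0$ and $\Gamma^+=\{x\in\Gamma:0\le x\}$. An action of $\Gamma^+$ on $\mathcal{A}$ is a map $x\mapsto\mathcal{V}_x$ from $\Gamma^+$ into the bounded positive linear maps $\mathcal{A}\to\mathcal{A}$ with $\mathcal{V}_0=\mathrm{Id}$ and $\mathcal{V}_x\circ\mathcal{V}_y=\mathcal{V}_{x+y}$; a C$^*$-dynamical system $(\mathcal{A},\Gamma^+,\alpha)$ is such an action in which each $\alpha_x$ is a $*$-endomorphism. A transfer action for $(\mathcal{A},\Gamma^+,\alpha)$ is an action $L$ with $L_x(\alpha_x(a)b)=aL_x(b)$ for all $a,b\in\mathcal{A}$, $x\in\Gamma^+$; it is complete if moreover $\alpha_x(L_x(a))=\alpha_x(1)a\alpha_x(1)$ for all $a\in\mathcal{A}$, $x\in\Gamma^+$. An interaction is a pair $(\mathcal{V},\mathcal{H})$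 of actions such that for every $x\in\Gamma^+$: (i) $\mathcal{V}_x\mathcal{H}_x\mathcal{V}_x=\mathcal{V}_x$; (ii) $\mathcal{H}_x\mathcal{V}_x\mathcal{H}_x=\mathcal{H}_x$; (iii) $\mathcal{V}_x(ab)=\mathcal{V}_x(a)\mathcal{V}_x(b)$ whenever $a$ or $b$ belongs to $\mathcal{H}_x(\mathcal{A})$; (iv) $\mathcal{H}_x(ab)=\mathcal{H}_x(a)\mathcal{H}_x(b)$ whenever $a$ or $b$ belongs to $\mathcal{V}_x(\mathcal{A})$. An interaction is complete if moreover $\mathcal{H}_x(\mathcal{V}_x(a))=\mathcal{H}_x(1)a\mathcal{H}_x(1)$ and $\mathcal{V}_x(\mathcal{H}_x(a))=\mathcal{V}_x(1)a\mathcal{V}_x(1)$ for all $x\in\Gamma^+$, $a\in\mathcal{A}$, and $\mathcal{H}_y(1)\mathcal{V}_x(1)=\mathcal{V}_x(1)\mathcal{H}_y(1)$ for all $x,y\in\Gamma^+$. *)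

(* Defs.v *)
From HB Require Import structures.
From mathcomp Require Import all_boot all_order all_algebra.
From mathcomp Require Import complex.
From mathcomp Require Import reals.
Set Implicit Arguments. Unset Strict Implicit. Unset Printing Implicit Defensive.
Import Order.TTheory GRing.Theory Num.Theory ComplexField.
Local Open Scope ring_scope.

Section Cstar.
Variables (R : realType) (A : algType R[i]) (star : A -> A) (nrm : A -> R).

Definition is_involution : Prop :=
  [/\ forall a b, star (a + b) = star a + star b,
      forall (c : R[i]) a, star (c *: a) = c^* *: star a,
      forall a b, star (a * b) = star b * star a
    & forall a, star (star a) = a].

Definition is_norm : Prop :=
  [/\ forall a, 0 <= nrm a,
      forall a, nrm a = 0 -> a = 0,
      forall a b, nrm (a + b) <= nrm a + nrm b
    & forall (c : R[i]) a, ((nrm (c *: a))%:C)%C = `|c| * ((nrm a)%:C)%C].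

Definition is_complete : Prop :=
  forall u : nat -> A,
    (forall e : R, 0 < e -> exists N, forall m n, (N <= m)%N -> (N <= n)%N ->
        nrm (u m - u n) < e) ->
    exists l : A, forall e : R, 0 < e -> exists N, forall n, (N <= n)%N ->
        nrm (u n - l) < e.

Definition unital_Cstar_algebra : Prop :=
  [/\ is_involution, is_norm,
      forall a b, nrm (a * b) <= nrm a * nrm b,
      forall a, nrm (star a * a) = nrm a ^+ 2
    & is_complete].

Definition positive (a : A) : Prop := exists b, a = star b * b.

Definition in_center (z : A) : Prop := forall a, z * a = a * z.

Definition complex_linear (T : A -> A) : Prop :=
  forall (c : R[i]) a b, T (c *: a + b) = c *: T a + T b.

Definition bounded (T : A -> A) : Prop :=
  exists K : R, forall a, nrm (T a) <= K * nrm a.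

Definition positive_map (T : A -> A) : Prop :=
  forall a, positive a -> positive (T a).

Definition bpl_map (T : A -> A) : Prop :=
  [/\ complex_linear T, bounded T & positive_map T].

Definition star_endomorphism (T : A -> A) : Prop :=
  [/\ complex_linear T,
      forall a b, T (a * b) = T a * T b
    & forall a, T (star a) = star (T a)].

Variables (G : zmodType) (le : G -> G -> Prop).

Definition totally_ordered_group : Prop :=
  [/\ forall x, le x x,
      forall x y z, le x y -> le y z -> le x z,
      forall x y, le x y -> le y x -> x = y,
      forall x y, le x y \/ le y x
    & forall x y z, le x y -> le (x + z) (y + z)].

(* An action of Gamma^+ on A: x |-> V x, for x in Gamma^+ (values of V
   outside Gamma^+ are irrelevant). *)
Definition action (V : G -> A -> A) : Prop :=
  [/\ forall x, le 0 x -> bpl_map (V x),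
      forall a, V 0 a = a
    & forall x y, le 0 x -> le 0 y -> forall a, V x (V y a) = V (x + y) a].

Definition Cstar_dynamical_system (alpha : G -> A -> A) : Prop :=
  action alpha /\ forall x, le 0 x -> star_endomorphism (alpha x).

Definition transfer_action (alpha L : G -> A -> A) : Prop :=
  action L /\
  forall x, le 0 x -> forall a b, L x (alpha x a * b) = a * L x b.

Definition complete_transfer_action (alpha L : G -> A -> A) : Prop :=
  transfer_action alpha L /\
  forall x, le 0 x -> forall a, alpha x (L x a) = alpha x 1 * a * alpha x 1.

Definition interaction (V H : G -> A -> A) : Prop :=
  [/\ action V, action H &
      forall x, le 0 x ->
      [/\ forall a, V x (H x (V x a)) = V x a,
          forall a, H x (V x (H x a)) = H x a,
          forall a b, (exists c, a = H x c) \/ (exists c, b = H x c) ->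
              V x (a * b) = V x a * V x b
        & forall a b, (exists c, a = V x c) \/ (exists c, b = V x c) ->
              H x (a * b) = H x a * H x b]].

Definition complete_interaction (V H : G -> A -> A) : Prop :=
  [/\ interaction V H,
      forall x, le 0 x -> forall a,
        H x (V x a) = H x 1 * a * H x 1 /\ V x (H x a) = V x 1 * a * V x 1
    & forall x y, le 0 x -> le 0 y -> H y 1 * V x 1 = V x 1 * H y 1].

End Cstar.

(* Main.v *)
Require Import Defs.
From mathcomp Require Import all_boot all_order all_algebra.
From mathcomp Require Import complex reals.
Import Order.TTheory GRing.Theory Num.Theory ComplexField.
Local Open Scope ring_scope.
Lemma conji (R : realType) : (('i%C : R[i])^*)%C = - 'i%C.
Proof. by apply/eqP; rewrite eq_complex /= oppr0 !eqxx. Qed.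
Lemma two_i (R : realType) : ('i%C : R[i]) - (('i%C : R[i])^*)%C != 0.
Proof. rewrite conji opprK; apply/negP; rewrite eq_complex /= => /andP[_].
by rewrite (_ : 1 + 1 = 2%:R) // pnatr_eq0. Qed.

Section S.
Variables (R : realType) (A : algType R[i]) (star : A -> A).
Hypothesis Hs : is_involution star.

Lemma starD a b : star (a + b) = star a + star b. Proof. by case: Hs. Qed.
Lemma starZ c a : star (c *: a) = (c^*)%C *: star a. Proof. by case: Hs. Qed.
Lemma starM a b : star (a * b) = star b * star a. Proof. by case: Hs. Qed.
Lemma starK a : star (star a) = a. Proof. by case: Hs. Qed.
Lemma star0 : star 0 = 0.
Proof. by apply: (addrI (star 0)); rewrite -starD !addr0. Qed.
Lemma starN a : star (- a) = - star a.
Proof. by apply/eqP; rewrite -subr_eq0 opprK -starD addNr star0. Qed.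
Lemma star1 : star 1 = 1.
Proof.
have h : star (star 1) = star (star 1) * star 1 by rewrite -starM mul1r.
by rewrite starK mul1r in h.
Qed.
Lemma star_inj a b : star a = star b -> a = b.
Proof. by move=> h; rewrite -(starK a) h starK. Qed.

Section Lin.
Variable T : A -> A.
Hypothesis HT : forall (c : R[i]) a b, T (c *: a + b) = c *: T a + T b.
Lemma linD a b : T (a + b) = T a + T b.
Proof. by have := HT 1 a b; rewrite !scale1r. Qed.
Lemma lin0 : T 0 = 0.
Proof. by apply: (addrI (T 0)); rewrite -linD !addr0. Qed.
Lemma linZ c a : T (c *: a) = c *: T a.
Proof. by rewrite -[c *: a]addr0 HT lin0 addr0. Qed.
Lemma linN a : T (- a) = - T a.
Proof. by rewrite -scaleN1r linZ scaleN1r. Qed.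
End Lin.

Lemma pos_star T (N : A -> R) : bpl_map star N T -> forall a, T (star a) = star (T a).
Proof.
case=> HT _ Hp a.
pose D x := T (star x) - star (T x).
have DD x y : D (x + y) = D x + D y.
  by rewrite /D starD (linD T HT) (linD T HT) starD opprD addrACA.
have DZ c x : D (c *: x) = (c^*)%C *: D x.
  by rewrite /D starZ !(linZ T HT) starZ scalerBr.
have D0 b : D (star b * b) = 0.
  have [b' hb'] := Hp (star b * b) (ex_intro _ b erefl).
  by rewrite /D starM starK hb' starM starK subrr.
have D1 : D 1 = 0 by have := D0 1; rewrite star1 mulr1.
have key c : (c^*)%C *: D (star a) + c *: D a = 0.
  have h := D0 (a + c *: 1).
  rewrite starD starZ star1 mulrDl !mulrDr -!scalerAl -!scalerAr !mul1r !mulr1 in h.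
  rewrite !DD !DZ D0 D1 !scaler0 add0r addr0 conjcK in h.
  exact: h.
have k1 := key 1.
rewrite (_ : (1^*)%C = 1) ?scale1r in k1; last by apply/eqP; rewrite eq_complex /= oppr0 !eqxx.
have ki := key 'i%C.
have hX : D (star a) = - D a by apply/eqP; rewrite -subr_eq0 opprK k1.
rewrite hX scalerN -scaleNr -scalerDl addrC in ki.
have : D a = 0 by rewrite -[D a](scalerK (two_i R)) ki scaler0.
by move/eqP; rewrite subr_eq0 => /eqP.
Qed.
End S.
Arguments pos_star {R A star}.
Arguments star_inj {R A star}.
Arguments starM {R A star}.

Theorem proposition3p4 (R : realType) (A : algType R[i]) (star : A -> A)
    (nrm : A -> R) (G : zmodType) (le : G -> G -> Prop) :
  unital_Cstar_algebra star nrm ->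
  totally_ordered_group le ->
  (forall alpha L : G -> A -> A,
     Cstar_dynamical_system star nrm le alpha ->
     complete_transfer_action star nrm le alpha L ->
     complete_interaction star nrm le alpha L /\
     (forall x, le 0 x -> in_center (L x 1))) /\
  (forall V H : G -> A -> A,
     complete_interaction star nrm le V H ->
     (forall x, le 0 x -> in_center (H x 1)) ->
     Cstar_dynamical_system star nrm le V /\
     complete_transfer_action star nrm le V H).
Proof.
case=> Hs _ _ _ _ _; split.
- move=> alpha L [Aa Halpha] [[AL HtL] HcL].
  have Lstar x : le 0 x -> forall a, L x (star a) = star (L x a).
    move=> hx; apply: (pos_star Hs); by case: AL => + _ _; apply.
  have HtR x : le 0 x -> forall b c, L x (b * alpha x c) = L x b * c.
    move=> hx b c; apply: (star_inj Hs).
    have [_ _ ast] := Halpha x hx.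
    by rewrite -Lstar // !(starM Hs) -ast HtL // Lstar.
  have aM x : le 0 x -> forall a b, alpha x (a * b) = alpha x a * alpha x b.
    by move=> hx; case: (Halpha x hx).
  have cen x : le 0 x -> in_center (L x 1).
    move=> hx a; rewrite -HtL // mulr1.
    by rewrite -[alpha x a]mul1r HtR.
  have idem x : le 0 x -> forall b, L x 1 * L x b = L x b.
    move=> hx b; rewrite -HtL // HcL // mulr1 -aM // mulr1.
    by rewrite HtL // mul1r.
  have Lal x : le 0 x -> forall c, L x (alpha x c) = c * L x 1.
    by move=> hx c; rewrite -[alpha x c]mulr1 HtL.
  split=> //; split=> //.
  + split=> // x hx; split.
    * by move=> a; rewrite HcL // -!aM // mul1r mulr1.
    * by move=> a; rewrite HcL // -mulrA HtL // HtR // mulr1 mul1r.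
    * by move=> a b _; rewrite aM.
    * move=> a b [[c ->]|[c ->]].
      - by rewrite HtL // Lal // -mulrA idem.
      - by rewrite HtR // Lal // -(cen x hx c) mulrA -(cen x hx (L x a)) idem.
  + move=> x hx a; split; last by rewrite HcL.
    by rewrite Lal // cen // -mulrA idem.
  + by move=> x y hx hy; rewrite cen.
- move=> V H [[AV AH Hint] Hcomp _] Hcen.
  have e_def x : le 0 x -> forall a, H x (V x a) = H x 1 * H x 1 * a.
    by move=> hx a; have [-> _] := Hcomp x hx a; rewrite -mulrA -(Hcen x hx a) mulrA.
  have eH x : le 0 x -> forall b, H x 1 * H x 1 * H x b = H x b.
    move=> hx b; have [_ hHVH _ _] := Hint x hx.
    by rewrite -e_def // hHVH.
  have ee x : le 0 x -> H x 1 * H x 1 * (H x 1 * H x 1) = H x 1 * H x 1.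
    by move=> hx; rewrite mulrA eH.
  have Vred x : le 0 x -> forall a, V x (H x 1 * H x 1 * a) = V x a.
    move=> hx a; have [hVHV _ _ _] := Hint x hx.
    by rewrite -e_def // hVHV.
  have VM x : le 0 x -> forall a b, V x (a * b) = V x a * V x b.
    move=> hx a b; have [_ _ hV _] := Hint x hx.
    rewrite -(Vred x hx a) -(Vred x hx b) -hV; last by left; exists (V x a); rewrite e_def.
    set e := H x 1 * H x 1.
    have ce : in_center e by move=> z; rewrite /e -mulrA (Hcen x hx z) mulrA (Hcen x hx z) -mulrA.
    have ee1 : e * e = e by rewrite /e ee.
    have Vr y : V x (e * y) = V x y by rewrite /e Vred.
    clearbody e.
    by rewrite -!mulrA (mulrA a e b) -(ce a) -mulrA mulrA ee1 Vr.
  split.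
  + split=> // x hx; split; [by case: AV => + _ _; case/(_ x hx) | exact: VM|].
    by apply: (pos_star Hs); case: AV => + _ _; apply.
  + split; last by move=> x hx a; have [_ ->] := Hcomp x hx a.
    split=> // x hx a b; have [_ _ _ hH] := Hint x hx.
    rewrite hH; last by left; exists a.
    rewrite e_def //.
    set e := H x 1 * H x 1.
    have ce : in_center e by move=> z; rewrite /e -mulrA (Hcen x hx z) mulrA (Hcen x hx z) -mulrA.
    have eH1 : e * H x b = H x b by rewrite /e eH.
    clearbody e.
    by rewrite -{2}eH1 mulrA (ce a).
Qed.
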